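(* Let $p$ be a prime, $m\ge1$ with $p>m$, and $1\le k\le m$. Let $E_k(x)=\exp\big(\sum_{i=0}^k\frac{x^{p^i}}{p^i}\big)$, let $\pi_k\in\mathbb{C}_p$ be a root of $\sum_{i=0}^k\frac{x^{p^i}}{p^i}=0$ with $\mathrm{ord}_p\,\pi_k=\frac{1}{p^{k-1}(p-1)}$, $\theta_k(x)=E_k(\pi_kx)$ and $\hat\theta_k(x)=\prod_{j=0}^\infty\theta_k(x^{p^j})$. For $0\le j\le k-1$ let $\gamma_{kj}=\sum_{i=0}^j\frac{\pi_k^{p^i}}{p^i}$. Then $$\hat\theta_k(x)=\exp\Big(\sum_{j=0}^{k-1}\gamma_{kj}x^{p^j}\Big),$$ and $\mathrm{ord}_p\,\gamma_{kj}=\frac{1}{p^{k-1-j}(p-1)}-j$.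
   Context: $\mathrm{ord}_p$ is the $p$-adic valuation on $\mathbb{C}_p$ with $\mathrm{ord}_p(p)=1$. *)

(* Defs.v *)
(* Formal power series over a field K are coefficient
   sequences nat -> K; C_p is modelled abstractly. *)
From HB Require Import structures.
From mathcomp Require Import all_boot all_order all_algebra.
Set Implicit Arguments. Unset Strict Implicit. Unset Printing Implicit Defensive.
Import Order.TTheory GRing.Theory Num.Theory.
Local Open Scope ring_scope.

Definition pseries (K : Type) := nat -> K.

Section PS.
Variable K : fieldType.

Definition ps1 : pseries K := fun n => if n == 0%N then 1 else 0.
Definition psmul (f g : pseries K) : pseries K :=
  fun n => \sum_(i < n.+1) f i * g (n - i)%N.
Definition pspow (f : pseries K) (m : nat) : pseries K := iter m (psmul f) ps1.
(* exp(f) = sum_m f^m/m!, for f with zero constant term (then f^m = O(x^m),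
   so the coefficient of x^n only receives contributions from m <= n) *)
Definition psexp (f : pseries K) : pseries K :=
  fun n => \sum_(m < n.+1) pspow f m n / (m`!)%:R.
Definition psscale (a : K) (f : pseries K) : pseries K := fun n => a ^+ n * f n.
Definition pssubst_pow (d : nat) (f : pseries K) : pseries K :=
  fun n => if (d %| n)%N then f (n %/ d)%N else 0.
Definition xadic_limit (u : nat -> pseries K) (g : pseries K) : Prop :=
  forall N, exists J0, forall J, (J0 <= J)%N ->
    forall n, (n <= N)%N -> u J n = g n.

Definition logE (p k : nat) : pseries K :=
  fun n => \sum_(i < k.+1) (if n == (p ^ i)%N then ((p ^ i)%:R)^-1 else 0).
Definition Ek (p k : nat) : pseries K := psexp (logE p k).
Definition theta (p k : nat) (pi : K) : pseries K := psscale pi (Ek p k).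
Definition theta_hat_partial (p k : nat) (pi : K) (J : nat) : pseries K :=
  \big[psmul/ps1]_(j < J) pssubst_pow (p ^ j) (theta p k pi).
Definition gamma (p : nat) (pi : K) (j : nat) : K :=
  \sum_(i < j.+1) pi ^+ (p ^ i) / (p ^ i)%:R.

Definition is_ord_p (p : nat) (ord : K -> rat) : Prop :=
  [/\ forall x y, x != 0 -> y != 0 -> ord (x * y) = ord x + ord y,
      forall x y, x != 0 -> y != 0 -> x + y != 0 ->
        Num.min (ord x) (ord y) <= ord (x + y)
    & ord (p%:R) = 1].
End PS.

(* Main.v *)
Require Import Defs.
From HB Require Import structures.
From mathcomp Require Import all_boot all_order all_algebra.
From mathcomp Require Import zify ring lra.
Import Order.TTheory GRing.Theory Num.Theory.
Local Open Scope ring_scope.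
Set Implicit Arguments. Unset Strict Implicit.

Section Trunc.
Variable K : fieldType.

Definition agree (N : nat) (f : pseries K) (P : {poly K}) :=
  forall i, (i <= N)%N -> f i = P`_i.
Definition eqN (N : nat) (P Q : {poly K}) :=
  forall i, (i <= N)%N -> P`_i = Q`_i.
Definition ordge (k : nat) (P : {poly K}) := forall i, (i < k)%N -> P`_i = 0.
Definition pexp (N : nat) (P : {poly K}) : {poly K} :=
  \sum_(m < N.+1) ((m`!)%:R)^-1 *: P ^+ m.
Definition trunc (N : nat) (f : pseries K) : {poly K} := \poly_(i < N.+1) f i.

Lemma agree_T N f : agree N f (trunc N f).
Proof. by move=> i le; rewrite coef_poly ltnS le. Qed.

Lemma agree_mul N f g P Q : agree N f P -> agree N g Q -> agree N (psmul f g) (P * Q).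
Proof.
move=> hf hg i le; rewrite /psmul coefM; apply: eq_bigr => j _.
have lj : (j <= i)%N by rewrite -ltnS.
rewrite hf ?hg //; first exact: leq_trans (leq_subr _ _) le.
exact: leq_trans lj le.
Qed.

Lemma agree_1 N : agree N (ps1 K) 1.
Proof. by move=> i _; rewrite coef1 /ps1; case: (i == 0)%N. Qed.

Lemma agree_pow N f P m : agree N f P -> agree N (pspow f m) (P ^+ m).
Proof.
move=> hf; elim: m => [|m IH]; first by rewrite expr0; exact: agree_1.
by rewrite exprS; apply: agree_mul.
Qed.

Lemma ordge_mul a b P Q : ordge a P -> ordge b Q -> ordge (a + b) (P * Q).
Proof.
move=> hP hQ i lt; rewrite coefM big1 // => j _.
have lj : (j <= i)%N by rewrite -ltnS.
case: (ltnP j a) => ja; first by rewrite hP ?mul0r.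
rewrite hQ ?mulr0 //. lia.
Qed.

Lemma ordge_pow P m : ordge 1 P -> ordge m (P ^+ m).
Proof.
move=> hP; elim: m => [|m IH]; first by [].
by rewrite exprS -add1n; apply: ordge_mul.
Qed.

Lemma agree_exp N f P : agree N f P -> ordge 1 P -> agree N (psexp f) (pexp N P).
Proof.
move=> hf h0 i le; rewrite /psexp /pexp coef_sum.
rewrite (big_ord_widen N.+1 (fun m => pspow f m i / (m`!)%:R)) ?ltnS //.
rewrite big_mkcond; apply: eq_bigr => m _; rewrite coefZ.
case: ifP => lm.
  by rewrite (agree_pow m hf) // mulrC.
rewrite ordge_pow ?mulr0 //.
by rewrite ltnNge -ltnS lm.
Qed.

Lemma eqN_mul N P P' Q Q' : eqN N P P' -> eqN N Q Q' -> eqN N (P * Q) (P' * Q').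
Proof.
move=> hP hQ i le; rewrite !coefM; apply: eq_bigr => j _.
have lj : (j <= i)%N by rewrite -ltnS.
rewrite hP ?hQ //; first exact: leq_trans (leq_subr _ _) le.
exact: leq_trans lj le.
Qed.

Lemma eqN_refl N P : eqN N P P. Proof. by []. Qed.
Lemma eqN_sym N P Q : eqN N P Q -> eqN N Q P.
Proof. by move=> h i le; rewrite h. Qed.
Lemma eqN_trans N P Q R : eqN N P Q -> eqN N Q R -> eqN N P R.
Proof. by move=> h1 h2 i le; rewrite h1 ?h2. Qed.

Lemma eqN_pow N P Q m : eqN N P Q -> eqN N (P ^+ m) (Q ^+ m).
Proof.
move=> h; elim: m => [|m IH]; first by [].
by rewrite !exprS; apply: eqN_mul.
Qed.

Lemma eqN_exp N P Q : eqN N P Q -> eqN N (pexp N P) (pexp N Q).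
Proof.
move=> h i le; rewrite /pexp !coef_sum; apply: eq_bigr => m _.
by rewrite !coefZ (eqN_pow m h).
Qed.

Lemma agree_eqN N f P Q : agree N f P -> eqN N P Q -> agree N f Q.
Proof. by move=> h1 h2 i le; rewrite h1 ?h2. Qed.

Lemma pexp_comp N P q : (pexp N P) \Po q = pexp N (P \Po q).
Proof.
rewrite /pexp (rmorph_sum (comp_poly q)); apply: eq_bigr => m _.
by rewrite /= comp_polyZ (rmorphXn (comp_poly q)).
Qed.

Lemma agree_subst N f P d : (0 < d)%N -> agree N f P -> agree N (pssubst_pow d f) (P \Po 'X^d).
Proof.
move=> d0 h i le; rewrite coef_comp_poly_Xn // /pssubst_pow.
case: ifP => // _; apply: h; exact: leq_trans (leq_div _ _) le.
Qed.

Lemma coef_comp_scale (P : {poly K}) (a : K) i : (P \Po (a *: 'X))`_i = a ^+ i * P`_i.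
Proof.
rewrite coef_comp_poly.
under eq_bigr => j _ do rewrite exprZn coefZ coefXn.
rewrite (eq_bigr (fun j : 'I_(size P) => if (j == i :> nat) then P`_j * a ^+ j else 0)); last first.
  by move=> j _; rewrite eq_sym; case: eqP => _; rewrite ?mulr1 ?mulr0.
rewrite -big_mkcond /=.
rewrite (big_ord1_eq _ (fun j => P`_j * a ^+ j)); case: ifP => [_|/negbT]; first by rewrite mulrC.
by rewrite -leqNgt => /leq_sizeP ->; rewrite ?mulr0.
Qed.

Lemma agree_scale N f P a : agree N f P -> agree N (psscale a f) (P \Po (a *: 'X)).
Proof. by move=> h i le; rewrite coef_comp_scale /psscale h. Qed.

Lemma ordge1_subst P d : (0 < d)%N -> ordge 1 P -> ordge 1 (P \Po 'X^d).
Proof.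
move=> d0 h i; rewrite ltnS leqn0 => /eqP ->.
by rewrite coef_comp_poly_Xn // dvdn0 div0n h.
Qed.

Lemma ordge1_scale P a : ordge 1 P -> ordge 1 (P \Po (a *: 'X)).
Proof.
move=> h i; rewrite ltnS leqn0 => /eqP ->.
by rewrite coef_comp_scale h ?mulr0.
Qed.

Lemma ordge1_add P Q : ordge 1 P -> ordge 1 Q -> ordge 1 (P + Q).
Proof. by move=> h1 h2 i l; rewrite coefD h1 ?h2 ?addr0. Qed.

Lemma agree_prod N J (F : nat -> pseries K) (Pj : nat -> {poly K}) :
  (forall j, agree N (F j) (Pj j)) ->
  agree N (\big[@psmul K/ps1 K]_(j < J) F j) (\prod_(j < J) Pj j).
Proof.
elim: J F Pj => [|J IH] F Pj h.
  by rewrite !big_ord0; apply: agree_1.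
rewrite !big_ord_recl; apply: agree_mul => //.
exact: (IH (fun j => F j.+1) (fun j => Pj j.+1)).
Qed.

End Trunc.

Section Exp.
Variable K : fieldType.
Hypothesis hc : [pchar K] =i pred0.

Lemma fact_neq0 n : ((n`!)%:R : K) != 0.
Proof. by rewrite ((pcharf0P K).1 hc) -lt0n fact_gt0. Qed.

Lemma tri_sum N (c : nat -> nat -> K) : (forall a b, (N < a + b)%N -> c a b = 0) ->
  \sum_(m < N.+1) \sum_(i < m.+1) c (m - i)%N i = \sum_(a < N.+1) \sum_(b < N.+1) c a b.
Proof.
move=> hz.
under eq_bigr => m _ do rewrite (big_ord_widen N.+1 (fun i => c (m - i)%N i) (ltn_ord m)) big_mkcond /=.
rewrite exchange_big /= [RHS]exchange_big /=; apply: eq_bigr => i _.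
rewrite -(big_mkcond (fun m : 'I_N.+1 => (i < m.+1)%N) (fun m : 'I_N.+1 => c (m - i)%N i)) /=.
rewrite -(big_mkord (fun m => (i < m.+1)%N) (fun m => c (m - i)%N i)).
rewrite -(big_mkord xpredT (fun a => c a i)).
rewrite (eq_bigl (fun m => true && (i <= m)%N)) //.
rewrite -big_nat_widenl // -{1}(add0n i) big_addn.
under eq_bigr => a _ do rewrite addnK.
have li : (N.+1 - i <= N.+1)%N by apply: leq_subr.
rewrite (big_cat_nat (leq0n (N.+1 - i)) li) /=.
rewrite [X in _ = _ + X]big1_seq ?addr0 // => a /andP [_].
rewrite mem_index_iota => /andP [h1 h2]; apply: hz; lia.
Qed.

Lemma pexp_add N (P Q : {poly K}) : ordge 1 P -> ordge 1 Q ->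
  eqN N (pexp N (P + Q)) (pexp N P * pexp N Q).
Proof.
move=> hP hQ i le.
rewrite /pexp [in RHS]big_distrl /= [in RHS]coef_sum.
under [RHS]eq_bigr => a _ do rewrite big_distrr /= coef_sum.
rewrite coef_sum.
pose c a b := ((a`!)%:R^-1 * (b`!)%:R^-1) * (P ^+ a * Q ^+ b)`_i : K.
transitivity (\sum_(m < N.+1) \sum_(j < m.+1) c (m - j)%N j).
  apply: eq_bigr => m _; rewrite exprDn scaler_sumr coef_sum.
  apply: eq_bigr => j _.
  rewrite coefZ coefMn /c.
  have lj : (j <= m)%N by rewrite -ltnS.
  have hf := bin_fact lj.
  have e : ((m`!)%:R : K) = ('C(m, j))%:R * ((j`!)%:R * ((m - j)`!)%:R).
    by rewrite -!natrM hf.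
  rewrite e -mulr_natl.
  have h1 := fact_neq0 j; have h2 := fact_neq0 (m - j).
  have h3 : (('C(m, j))%:R : K) != 0.
    by rewrite ((pcharf0P K).1 hc) -lt0n bin_gt0.
  field. by rewrite h1 h2 h3.
rewrite tri_sum.
  apply: eq_bigr => a _; apply: eq_bigr => b _.
  by rewrite -scalerAl -scalerAr !coefZ /c mulrA.
move=> a b lt; rewrite /c (ordge_mul (ordge_pow (m:=a) hP) (ordge_pow (m:=b) hQ)) ?mulr0 //.
exact: leq_ltn_trans le lt.
Qed.

Lemma ordge1_sum J (Pj : nat -> {poly K}) : (forall j, ordge 1 (Pj j)) ->
  ordge 1 (\sum_(j < J) Pj j).
Proof. by move=> h i l; rewrite coef_sum big1 // => j _; rewrite h. Qed.

Lemma pexp0 N : eqN N (1 : {poly K}) (pexp N 0).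
Proof.
move=> i _; rewrite /pexp big_ord_recl expr0 big1 ?addr0; last first.
  by move=> j _; rewrite expr0n /= scaler0.
by rewrite fact0 invr1 scale1r.
Qed.

Lemma prod_pexp N J (Pj : nat -> {poly K}) : (forall j, ordge 1 (Pj j)) ->
  eqN N (\prod_(j < J) pexp N (Pj j)) (pexp N (\sum_(j < J) Pj j)).
Proof.
elim: J Pj => [|J IH] Pj h.
  by rewrite !big_ord0; apply: pexp0.
rewrite !big_ord_recl.
have e1 : \sum_(j < J) Pj (lift ord0 j) = \sum_(j < J) Pj j.+1 by apply: eq_bigr.
have e2 : \prod_(j < J) pexp N (Pj (lift ord0 j)) = \prod_(j < J) pexp N (Pj j.+1) by apply: eq_bigr.
rewrite e1 e2.
apply: (eqN_trans _ (eqN_sym (pexp_add (N:=N) (h 0%N) (ordge1_sum J (fun j => h j.+1))))).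
apply: eqN_mul => //.
exact: (IH (fun j => Pj j.+1)).
Qed.

End Exp.

Section Series.
Variable K : fieldType.
Hypothesis hc : [pchar K] =i pred0.
Variables (p k : nat) (pi : K).
Hypothesis pp : prime p.
Hypothesis hsum : \sum_(i < k.+1) pi ^+ (p ^ i) / (p ^ i)%:R = 0.

Let a (i : nat) : K := pi ^+ (p ^ i) / (p ^ i)%:R.

Lemma p_gt1 : (1 < p)%N. Proof. exact: prime_gt1. Qed.
Lemma pe_gt0 j : (0 < p ^ j)%N. Proof. by rewrite expn_gt0 prime_gt0. Qed.

Lemma subst_coef j n : pssubst_pow (p ^ j) (psscale pi (logE K p k)) n =
  \sum_(i < k.+1) (if n == (p ^ (j + i))%N then a i else 0).
Proof.
rewrite /pssubst_pow /psscale /logE; case: ifP => hd.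
  rewrite mulr_sumr; apply: eq_bigr => i _.
  have e : (n %/ p ^ j == p ^ i)%N = (n == p ^ (j + i))%N.
    rewrite -[X in _ = (X == _)](divnK hd) expnD [X in _ = (_ == X)]mulnC eqn_pmul2r //.
    exact: pe_gt0.
  rewrite e; case: ifP => [/eqP he|]; last by rewrite mulr0.
  by rewrite /a he expnD mulKn ?pe_gt0.
rewrite big1 // => i _; case: ifP => // /eqP e.
by move: hd; rewrite e expnD dvdn_mulr.
Qed.

Lemma sum_coef J n : (n < p ^ J)%N ->
  \sum_(j < J) \sum_(i < k.+1) (if n == (p ^ (j + i))%N then a i else 0) =
  \sum_(j < k) (if n == (p ^ j)%N then gamma p pi j else 0).
Proof.
move=> hn; have p1 := p_gt1.
set t := logn p n; case: (boolP (n == p ^ t)%N) => ht; last first.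
  rewrite big1; last first.
    move=> j _; rewrite big1 // => i _; case: ifP => // /eqP e.
    by move: ht; rewrite /t e pfactorK // eqxx.
  rewrite big1 // => j _; case: ifP => // /eqP e.
  by move: ht; rewrite /t e pfactorK // eqxx.
move: hn; rewrite (eqP ht) ltn_exp2l // => tJ.
under eq_bigr => j _ do under eq_bigr => i _ do rewrite eqn_exp2l //.
under [RHS]eq_bigr => j _ do rewrite eqn_exp2l //.
rewrite exchange_big /=.
have inner : forall i : 'I_k.+1, \sum_(j < J) (if t == (j + i)%N then a i else 0)
   = if (i <= t)%N then a i else 0.
  move=> i; case: (leqP i t) => hit.
    rewrite (eq_bigr (fun j : 'I_J => if (j == (t - i)%N :> nat) then a i else 0)); last first.
      move=> j _; have -> : (t == j + i)%N = (j == t - i :> nat)%N by apply/eqP/eqP; lia.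
      by [].
    rewrite -big_mkcond /= (big_ord1_eq _ (fun _ => a i)).
    by have -> : (t - i < J)%N by lia.
  rewrite big1 // => j _; case: ifP => // /eqP e; lia.
under eq_bigr => i _ do rewrite inner.
rewrite (eq_bigr (fun j : 'I_k => if (j == t :> nat) then gamma p pi j else 0)); last first.
  by move=> j _; rewrite eq_sym.
rewrite -big_mkcond /= -(big_mkcond (fun j : 'I_k => j == t :> nat)) /=.
rewrite (big_ord1_eq _ (fun j => gamma p pi j)).
case: (ltnP t k) => tk.
  rewrite /gamma (big_ord_widen k.+1 (fun i => pi ^+ (p ^ i) / (p ^ i)%:R)) //.
  lia.
rewrite big_mkcond -[X in _ = X]hsum; apply: eq_bigr => i _.
have -> : (i <= t)%N by have := ltn_ord i; lia.
by [].
Qed.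

Lemma series_part :
  xadic_limit (theta_hat_partial p k pi)
    (psexp (fun n => \sum_(j < k) (if n == (p ^ j)%N then gamma p pi j else 0))).
Proof.
set G := (fun n => \sum_(j < k) (if n == (p ^ j)%N then gamma p pi j else 0)).
move=> N; exists N => J hJ n hn.
set L := logE K p k.
have L0 : ordge 1 (trunc N L).
  move=> i; rewrite ltnS leqn0 => /eqP ->; rewrite coef_poly /= /L /logE big1 // => j _.
  by have := pe_gt0 j; case: (p ^ j)%N.
have G0 : ordge 1 (trunc N G).
  move=> i; rewrite ltnS leqn0 => /eqP ->; rewrite coef_poly /= /G big1 // => j _.
  by have := pe_gt0 j; case: (p ^ j)%N.
pose Q j := (trunc N L \Po (pi *: 'X)) \Po 'X^(p ^ j).
have hQ : forall j, ordge 1 (Q j).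
  by move=> j; apply: ordge1_subst; [exact: pe_gt0 | exact: ordge1_scale].
have A1 : forall j, agree N (pssubst_pow (p ^ j) (theta p k pi)) (pexp N (Q j)).
  move=> j; rewrite /Q -!pexp_comp; apply: agree_subst; first exact: pe_gt0.
  apply: agree_scale; apply: agree_exp => //; exact: agree_T.
have A2 := agree_prod J A1.
have A3 := prod_pexp hc (N:=N) J hQ.
have A4 : agree N (psexp G) (pexp N (trunc N G)) by apply: agree_exp => //; exact: agree_T.
have A5 : eqN N (\sum_(j < J) Q j) (trunc N G).
  move=> i hi; rewrite coef_sum coef_poly ltnS hi.
  have -> : \sum_(j < J) (Q j)`_i = \sum_(j < J) pssubst_pow (p ^ j) (psscale pi L) i.
    apply: eq_bigr => j _; rewrite /Q.
    rewrite -(agree_subst (pe_gt0 j) (agree_scale pi (agree_T (N:=N) L))) //.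
  under eq_bigr => j _ do rewrite subst_coef.
  apply: sum_coef.
  apply: (leq_ltn_trans hi); apply: (leq_trans (ltn_expl N p_gt1)).
  by apply: leq_pexp2l; [exact: prime_gt0 | ].
rewrite /theta_hat_partial (A2 n hn) (A3 n hn) (eqN_exp A5 hn) -(A4 n hn).
by [].
Qed.

End Series.

Section Val.
Variable K : fieldType.
Hypothesis hc : [pchar K] =i pred0.
Variable ord : K -> rat.
Variables (p k : nat) (pi : K).
Hypothesis hord : is_ord_p p ord.
Hypothesis pp : prime p.
Hypothesis k1 : (1 <= k)%N.
Hypothesis pi0 : pi != 0.
Hypothesis hpi : ord pi = ((p ^ (k - 1) * (p - 1))%:R)^-1.

Lemma ordM x y : x != 0 -> y != 0 -> ord (x * y) = ord x + ord y.
Proof. by move=> x0 y0; case: hord => h _ _; apply: h. Qed.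

Lemma ord1 : ord 1 = 0.
Proof.
have := ordM (oner_neq0 K) (oner_neq0 K); rewrite mulr1 => h.
lra.
Qed.

Lemma ordN1 : ord (-1) = 0.
Proof.
have n1 : (-1 : K) != 0 by rewrite oppr_eq0 oner_neq0.
have := ordM n1 n1; rewrite mulrNN mulr1 ord1 => h.
lra.
Qed.

Lemma ordN x : x != 0 -> ord (- x) = ord x.
Proof.
move=> x0; rewrite -mulN1r ordM ?ordN1 ?add0r //.
by rewrite oppr_eq0 oner_neq0.
Qed.

Lemma ordX x n : x != 0 -> ord (x ^+ n) = n%:R * ord x.
Proof.
move=> x0; elim: n => [|n IH]; first by rewrite expr0 ord1 mul0r.
by rewrite exprS ordM ?expf_neq0 // IH -[n.+1]addn1 natrD; ring.
Qed.

Lemma ordV x : x != 0 -> ord (x^-1) = - ord x.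
Proof.
move=> x0; have := ordM x0 (invr_neq0 x0); rewrite mulfV // ord1 => h.
lra.
Qed.

Lemma ord_strict x y : x != 0 -> y != 0 -> ord x < ord y ->
  x + y != 0 /\ ord (x + y) = ord x.
Proof.
move=> x0 y0 lt.
have xy0 : x + y != 0.
  apply/negP => /eqP e; have ey : y = - x by apply/eqP; rewrite -addr_eq0 addrC e.
  by move: lt; rewrite ey ordN // ltxx.
split => //.
have [_ hu _] : is_ord_p p ord := hord.
have h1 := hu _ _ x0 y0 xy0.
have ny0 : - y != 0 by rewrite oppr_eq0.
have h2 := hu _ _ xy0 ny0; rewrite addrK in h2.
have := h2 x0; rewrite ordN // ge_min => /orP h3.
move: h1; rewrite ge_min => /orP h4.
case: h3 => h3; case: h4 => h4; lra.
Qed.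

Lemma natK_neq0 n : (0 < n)%N -> (n%:R : K) != 0.
Proof. by move=> n0; rewrite ((pcharf0P K).1 hc) -lt0n. Qed.

Lemma ord_pe i : ord ((p ^ i)%:R) = i%:R.
Proof.
have p0 : (p%:R : K) != 0 by apply: natK_neq0; exact: prime_gt0.
have [_ _ h] : is_ord_p p ord := hord.
by rewrite natrX ordX // h mulr1.
Qed.

Definition aa i := pi ^+ (p ^ i) / (p ^ i)%:R.

Lemma aa_neq0 i : aa i != 0.
Proof.
rewrite /aa mulf_neq0 ?expf_neq0 ?invr_neq0 //.
by apply: natK_neq0; rewrite expn_gt0 prime_gt0.
Qed.

Lemma ord_aa i : ord (aa i) = (p ^ i)%:R * ord pi - i%:R.
Proof.
have h0 : ((p ^ i)%:R : K) != 0 by apply: natK_neq0; rewrite expn_gt0 prime_gt0.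
by rewrite /aa ordM ?expf_neq0 ?invr_neq0 // ordX // ordV // ord_pe.
Qed.

Lemma aa_dec i : (i.+1 < k)%N -> ord (aa i.+1) < ord (aa i).
Proof.
move=> ik; rewrite !ord_aa hpi.
have p1 : (1 < p)%N by exact: prime_gt1.
have e1 : (p ^ (k - 1))%N = (p ^ i * p ^ (k - 1 - i))%N by rewrite -expnD; congr expn; lia.
have e2 : (p ^ i.+1)%N = (p ^ i * (p - 1) + p ^ i)%N.
  by rewrite expnS mulnC -{3}(muln1 (p ^ i)%N) -mulnDr subnK // ltnW.
rewrite e1 e2 natrD !natrM mulrSr.
set u : rat := (p ^ i)%:R; set v : rat := (p ^ (k - 1 - i))%:R; set w : rat := (p - 1)%:R.
have u0 : u != 0 by rewrite pnatr_eq0 -lt0n expn_gt0 prime_gt0.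
have w0 : w != 0 by rewrite pnatr_eq0 -lt0n subn_gt0.
have v1 : 1 < v.
  rewrite ltr1n; apply: (leq_trans p1); rewrite -{1}(expn1 p).
  apply: leq_pexp2l; [exact: prime_gt0 | lia].
have v0 : v != 0 by apply/eqP => h; move: v1; rewrite h ltr10.
have e3 : (u * w + u) * (u * v * w)^-1 = u * (u * v * w)^-1 + v^-1 by field; rewrite u0 v0 w0.
rewrite e3.
have : v^-1 < 1 by rewrite invf_lt1 // (lt_trans ltr01 v1).
lra.
Qed.

Lemma gamma_val j : (j < k)%N -> gamma p pi j != 0 /\ ord (gamma p pi j) = ord (aa j).
Proof.
elim: j => [|j IH] jk.
  by rewrite /gamma big_ord1 -/(aa 0); split => //; exact: aa_neq0.
have [g0 og] := IH (ltnW jk).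
have lt : ord (aa j.+1) < ord (gamma p pi j) by rewrite og; apply: aa_dec.
have [s0 os] := ord_strict (aa_neq0 j.+1) g0 lt.
have e : gamma p pi j.+1 = aa j.+1 + gamma p pi j.
  by rewrite /gamma big_ord_recr /= addrC.
by rewrite e.
Qed.

Lemma ord_final j : (j < k)%N ->
  ord (aa j) = ((p ^ (k - 1 - j) * (p - 1))%:R)^-1 - j%:R.
Proof.
move=> jk; rewrite ord_aa hpi.
have e1 : (p ^ (k - 1))%N = (p ^ j * p ^ (k - 1 - j))%N by rewrite -expnD; congr expn; lia.
rewrite e1 !natrM.
have p1 : (1 < p)%N by exact: prime_gt1.
set u : rat := (p ^ j)%:R; set v : rat := (p ^ (k - 1 - j))%:R; set w : rat := (p - 1)%:R.
have u0 : u != 0 by rewrite pnatr_eq0 -lt0n expn_gt0 prime_gt0.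
have v0 : v != 0 by rewrite pnatr_eq0 -lt0n expn_gt0 prime_gt0.
have w0 : w != 0 by rewrite pnatr_eq0 -lt0n subn_gt0.
by field; rewrite u0 v0 w0.
Qed.

End Val.

Theorem mainTheorem6 (K : closedFieldType) (ord : K -> rat) (p m k : nat) (pi : K) :
  [pchar K] =i pred0 -> is_ord_p p ord ->
  prime p -> (1 <= m)%N -> (m < p)%N -> (1 <= k <= m)%N ->
  pi != 0 ->
  \sum_(i < k.+1) pi ^+ (p ^ i) / (p ^ i)%:R = 0 ->
  ord pi = ((p ^ (k - 1) * (p - 1))%:R)^-1 ->
  xadic_limit (theta_hat_partial p k pi)
    (psexp (fun n => \sum_(j < k) (if n == (p ^ j)%N then gamma p pi j else 0)))
  /\ (forall j, (j < k)%N ->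
        gamma p pi j != 0 /\
        ord (gamma p pi j) = ((p ^ (k - 1 - j) * (p - 1))%:R)^-1 - j%:R).
Proof.
move=> hc hord pp m1 mp /andP [k1 km] pi0 hsum hpi; split.
  exact: series_part.
move=> j jk.
have [g0 og] := gamma_val hc hord pp k1 pi0 hpi jk.
split => //; rewrite og.
exact: ord_final.
Qed.
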